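(* Let $B$ be an $n\times n$ matrix with integer entries such that $\mathrm{Trace}(B)\le n$. Then all eigenvalues of $B$ are real and positive if and only if $B=I+N$, where $I$ is the $n\times n$ identity matrix and $N$ is a nilpotent matrix.
   Context: Eigenvalues are taken over $\mathbb{C}$. *)

(* Defs.v *)
From mathcomp Require Import all_boot all_order all_algebra all_field.
Set Implicit Arguments. Unset Strict Implicit. Unset Printing Implicit Defensive.
Import GRing.Theory Num.Theory.
Local Open Scope ring_scope.

(* A square matrix N is nilpotent if some power N^k (k >= 0) is the zero matrix.
   Powers are written with iter to allow any size n (including n = 0). *)
Definition mx_nilpotent (R : pzRingType) (n : nat) (N : 'M[R]_n) : Prop :=
  exists k : nat, iter k (mulmx N) (1%:M) = 0.

Definition mxC (n : nat) (B : 'M[int]_n) : 'M[algC]_n := map_mx (fun z : int => z%:~R) B.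

(* Main.v *)
Require Import Defs.
From mathcomp Require Import all_boot all_order all_algebra all_field.
Import Order.TTheory GRing.Theory Num.Theory.
Local Open Scope ring_scope.

Lemma mxCE n (B : 'M[int]_n) : mxC B = map_mx intr B.
Proof. by []. Qed.

Lemma mxC_iter n (N : 'M[int]_n) k :
  mxC (iter k (mulmx N) 1%:M) = iter k (mulmx (mxC N)) 1%:M.
Proof.
rewrite !mxCE; elim: k => [|k IH] /=.
  by rewrite (map_scalar_mx intr) rmorph1.
by rewrite map_mxM IH.
Qed.

Lemma iter_eig (F : fieldType) n (M : 'M[F]_n) (v : 'rV_n) w k :
  v *m M = w *: v -> v *m iter k (mulmx M) 1%:M = w ^+ k *: v.
Proof.
move=> Hv; elim: k => [|k IH] /=; first by rewrite mulmx1 expr0 scale1r.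
by rewrite mulmxA Hv -scalemxAl IH scalerA exprS.
Qed.

Lemma iter_exp n (M : 'M[algC]_n.+1) k : iter k (mulmx M) 1%:M = M ^+ k.
Proof. by elim: k => [|k IH] //=; rewrite IH exprS. Qed.

Theorem mainTheorem3 (n : nat) (B : 'M[int]_n) (htr : \tr B <= n%:R) :
  (forall z : algC, eigenvalue (mxC B) z -> z \is Num.real /\ 0 < z) <->
  (exists N : 'M[int]_n, mx_nilpotent N /\ B = 1%:M + N).
Proof.
split; last first.
  move=> [N [[k Hk] ->]] z /eigenvalueP [v Hv vn0].
  have HN : v *m mxC N = (z - 1) *: v.
    move: Hv; rewrite !mxCE map_mxD (map_scalar_mx intr) rmorph1 mulmxDr.
    by rewrite mulmx1 scalerBl scale1r => <-; rewrite addrC addKr.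
  have := @iter_eig _ _ _ _ _ k HN; rewrite -mxC_iter Hk !mxCE map_mx0 mulmx0.
  move/esym/eqP; rewrite scaler_eq0 (negbTE vn0) orbF expf_eq0 subr_eq0.
  by case/andP=> _ /eqP ->; rewrite real1 ltr01.
move=> H.
case: n B htr H => [|m] B htr H.
  exists B; split; last by apply/matrixP => [[]].
  by exists 0%N; apply/matrixP => [[]].
set A := mxC B.
have [r Dp] := closed_field_poly_normal (char_poly A).
rewrite (monicP (char_poly_monic A)) scale1r in Dp.
have sr : size r = m.+1.
  by have := size_char_poly A; rewrite Dp size_prod_XsubC => -[].
have rpos z : z \in r -> z \is Num.real /\ 0 < z.
  by move=> zr; apply: H; rewrite eigenvalue_root_char Dp root_prod_XsubC.
have trE : \sum_(z <- r) z = (\tr B)%:~R.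
  have := char_poly_trace A isT; rewrite Dp.
  have e : m.+1.-1 = (size r).-1 by rewrite sr.
  rewrite e coefPn_prod_XsubC ?sr //.
  by move/oppr_inj => ->; rewrite /A mxCE (trace_map_mx intr).
have detE : \prod_(z <- r) z = (\det B)%:~R.
  have := char_poly_det A; rewrite Dp coef0_prod_XsubC sr.
  by move/lreg_sign => ->; rewrite /A mxCE (det_map_mx intr).
have Ppos : 0 < \prod_(z <- r) z.
  by rewrite big_seq; apply: prodr_gt0 => z /rpos [].
have P1 : 1 <= \prod_(z <- r) z.
  by move: Ppos; rewrite detE ltr0z gtz0_ge1 -(ler_int algC).
have s1 : \sum_(z <- r) z <= m.+1%:R.
  by rewrite trE; move: htr; rewrite -(ler_int algC) rmorph_nat.
have s0 : 0 <= \sum_(z <- r) z.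
  by rewrite big_seq sumr_ge0 // => z /rpos [] _ /ltW.
pose E := fun i : 'I_(size r) => r`_i.
have sE : \sum_(i in predT) E i = \sum_(z <- r) z.
  by rewrite (big_nth 0) big_mkord; apply: eq_bigl.
have pE : \prod_(i in predT) E i = \prod_(z <- r) z.
  by rewrite (big_nth 0) big_mkord; apply: eq_bigl.
have cA : #|(predT : pred 'I_(size r))| = m.+1 by rewrite card_ord sr.
have Ege : {in predT, forall i, 0 <= E i *+ m.+1}.
  by move=> i _; rewrite mulrn_wge0 // /E; case: (rpos _ (mem_nth 0 (ltn_ord i))) => _ /ltW.
move: (leif_AGM_scaled (A := predT) (E := E)) => /=; rewrite cA => /(_ Ege).
rewrite prodrMn_const sE pE cA => agm.
have k0 : (0 : algC) <= (m.+1 ^ m.+1)%:R by rewrite ler0n.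
have le1 : (m.+1 ^ m.+1)%:R <= \prod_(z <- r) z *+ m.+1 ^ m.+1.
  by rewrite -[X in _ <= X]mulr_natr -[X in X <= _]mul1r; exact: (ler_wpM2r k0 P1).
have le2 : (\sum_(z <- r) z) ^+ m.+1 <= (m.+1 ^ m.+1)%:R.
  by rewrite natrX; apply: lerXn2r => //; rewrite nnegrE // ler0n.
have eqC := agm.2.
have heq : \prod_(z <- r) z *+ m.+1 ^ m.+1 == (\sum_(z <- r) z) ^+ m.+1.
  by rewrite eq_le agm.1 /= (le_trans le2 le1).
rewrite heq in eqC.
have hz : forall z, z \in r -> z = r`_0.
  move=> z zr; rewrite -(nth_index 0 zr).
  have i1 : (index z r < size r)%N by rewrite index_mem.
  have i0 : (0 < size r)%N by rewrite sr.
  move: (esym eqC) => /forall_inP /(_ (Ordinal i1) isT) /forall_inP /(_ (Ordinal i0) isT).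
  by move/eqP.
have sc : \sum_(z <- r) z = r`_0 *+ m.+1.
  by rewrite (eq_big_seq (fun _ => r`_0)) // big_const_seq count_predT sr iter_addr_0.
have pc : \prod_(z <- r) z = r`_0 ^+ m.+1.
  by rewrite (eq_big_seq (fun _ => r`_0)) // big_const_seq count_predT sr iter_mulr_1.
have c0 : 0 <= r`_0 by case: (rpos _ (mem_nth 0 (_ : (0 < size r)%N))) => [|_ /ltW] //; rewrite sr.
have c1 : r`_0 <= 1 by move: s1; rewrite sc -[X in _ <= X]mulr1n lerMn2r.
have c2 : 1 <= r`_0.
  by move: P1; rewrite pc -[X in X <= _](expr1n _ m.+1) ler_pXn2r // nnegrE.
have c : r`_0 = 1 by apply/eqP; rewrite eq_le c1 c2.
have Dp1 : char_poly A = ('X - 1) ^+ m.+1.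
  rewrite Dp (eq_big_seq (fun _ => 'X - 1)); last by move=> z /hz ->; rewrite c.
  by rewrite big_const_seq count_predT sr iter_mulr_1.
have CH := Cayley_Hamilton A.
rewrite Dp1 rmorphXn rmorphB /= horner_mx_X rmorph1 in CH.
exists (B - 1%:M); split; last by rewrite addrC subrK.
exists m.+1; apply/matrixP => i j.
have := congr1 (fun M : 'M[algC]_m.+1 => M i j) (@mxC_iter _ (B - 1%:M) m.+1).
rewrite iter_exp [mxC (B - _)]mxCE map_mxB (map_scalar_mx intr) rmorph1 -mxCE -/A.
rewrite -[(1%:M : 'M[algC]_m.+1)]/(1 : 'M[algC]_m.+1) CH !mxE.
by move/eqP; rewrite intr_eq0 => /eqP ->.
Qed.
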